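(* Let $G=(V,E)$ be a locally finite, connected, infinite graph, $x\in V$, and $p\in[0,1]$. For Bernoulli$(p)$ bond percolation on $G$, \[ \inf_{\Pi\in\mathscr{B}_E}\sum_{e\in\Pi}\mathbb{P}_p(A(x,e,\Pi))=\inf_S\varphi_p(x,S), \] where the infimum on the right is over all finite sets $S\subset V$ with $x\in S$.
   Context: Bernoulli$(p)$ bond percolation keeps each edge independently open with probability $p$; $\mathbb{P}_p$ is its law. For an edge set $\Pi\subset E$ and $e\in\Pi$, $A(x,e,\Pi)$ is the event that $e$ is open and $x$ is connected to $e$ by an open path that uses no edge of $\Pi\setminus\{e\}$. For $K\subset V$, the edge boundary is $\Delta K=\{(y,z)\in E:y\in K,z\notin K\}$, and $\mathscr{B}_E=\{\Delta S: S\text{ is the vertex set of a finite connected subgraph containing }x\}$. For a finite $S\subset V$ with $x\in S$, $\varphi_p(x,S)=p\sum_{y\in S}\sum_{z\notin S,\,(y,z)\in E}\mathbb{P}_p(x\stackrel{S}{\longleftrightarrow}y)$, where $\{x\stackrel{S}{\longleftrightarrow}y\}$ is the event that there is an open path from $x$ to $y$ using only vertices of $S$ (the inner sum counts edges $(y,z)$ with multiplicity). *)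

(* Defs.v *)
From HB Require Import structures.
From mathcomp Require Import all_boot all_order all_algebra.
From mathcomp Require Import all_classical all_reals all_analysis.
Set Implicit Arguments. Unset Strict Implicit. Unset Printing Implicit Defensive.
Import Order.TTheory GRing.Theory Num.Theory.
Local Open Scope classical_set_scope.
Local Open Scope ring_scope.

(* A (multi)graph: vertex type V, edge type E, each edge has two endpoints
   [ends e] (the order is irrelevant: the graph is undirected). *)
Section Graph.
Variables (V E : Type) (ends : E -> V * V).

Definition joins (e : E) (y z : V) : Prop :=
  ends e = (y, z) \/ ends e = (z, y).

Inductive walk (ok : E -> Prop) : V -> V -> Prop :=
| walk_nil u : walk ok u u
| walk_cons e u w v : ok e -> joins e u w -> walk ok w v -> walk ok u v.

Definition locally_finite : Prop :=
  forall v : V, finite_set [set e : E | exists w, joins e v w].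

Definition connected_graph : Prop :=
  forall u v : V, walk (fun _ => True) u v.

Definition infinite_graph : Prop := ~ finite_set [set: V].

Definition edge_boundary (K : set V) : set E :=
  [set e | exists y z, joins e y z /\ K y /\ ~ K z].

Definition finite_connected_containing (x : V) (S : set V) : Prop :=
  finite_set S /\ S x /\
  forall u v, S u -> S v ->
    walk (fun e => exists a b, joins e a b /\ S a /\ S b) u v.

Definition B_E (x : V) : set (set E) :=
  [set Pi | exists S, finite_connected_containing x S /\ Pi = edge_boundary S].

End Graph.

Section Events.
Variables (V E Omega : Type) (ends : E -> V * V) (open_ : E -> Omega -> bool).

Definition A_event (x : V) (e : E) (Pi : set E) : set Omega :=
  [set w | open_ e w /\
     exists a b, joins ends e a b /\
       walk ends (fun f => open_ f w /\ ~ (Pi f /\ f <> e)) x a].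

Definition conn_in (S : set V) (x y : V) : set Omega :=
  [set w | S x /\
     walk ends (fun f => open_ f w /\ exists a b, joins ends f a b /\ S a /\ S b) x y].
End Events.

Section Phi.
Variables (d : measure_display) (R : realType) (Omega : measurableType d)
  (P : probability Omega R) (V E : choiceType) (ends : E -> V * V)
  (open_ : E -> Omega -> bool).

Definition phi (p : R) (x : V) (S : set V) : \bar R :=
  (p%:E * \esum_(y in S)
     \esum_(e in [set e | exists z, joins ends e y z /\ ~ S z])
        P (conn_in ends open_ S x y))%E.

(* Bernoulli(p) bond percolation: the edge states are measurable,
   each open with probability p, and mutually independent. *)
Definition bernoulli_percolation (p : R) : Prop :=
  (forall e, measurable [set w | open_ e w]) /\
  (forall e, P [set w | open_ e w] = p%:E) /\
  (forall (s : seq E), uniq s ->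
     P [set w | forall e, e \in s -> open_ e w] = (p ^+ size s)%:E).
End Phi.

(* Main.v *)
Require Import Defs.
From HB Require Import structures.
From mathcomp Require Import all_boot all_order all_algebra.
From mathcomp Require Import all_classical all_reals all_analysis.
From mathcomp Require Import ring zify.
Import Order.TTheory GRing.Theory Num.Theory.
Local Open Scope classical_set_scope.
Local Open Scope ring_scope.
Set Implicit Arguments. Unset Strict Implicit.


Section Walks.
Variables (V E : Type) (ends : E -> V * V).

Lemma joins_sym e a b : joins ends e a b -> joins ends e b a.
Proof. by case=> H; [right|left]. Qed.

Lemma joins_eq e a b c d : joins ends e a b -> joins ends e c d ->
  (a = c /\ b = d) \/ (a = d /\ b = c).
Proof.
case=> H1 [] H2; rewrite H1 in H2; case: H2 => -> ->; by [left|right].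
Qed.

Lemma walk_mono (ok ok' : E -> Prop) u v :
  (forall e, ok e -> ok' e) -> walk ends ok u v -> walk ends ok' u v.
Proof.
move=> H; elim=> [u0|e u0 w v0 oke j _ IH]; first exact: walk_nil.
exact: (walk_cons (H _ oke) j IH).
Qed.

Lemma walk_cat ok u v w : walk ends ok u v -> walk ends ok v w -> walk ends ok u w.
Proof.
elim=> // e u0 w0 v0 oke j _ IH H; exact: (walk_cons oke j (IH H)).
Qed.

Lemma walk_snoc ok u v w e : walk ends ok u v -> ok e -> joins ends e v w ->
  walk ends ok u w.
Proof.
move=> H oke j; apply: (walk_cat H); apply: (walk_cons oke j); exact: walk_nil.
Qed.

Lemma walk_rev ok u v : walk ends ok u v -> walk ends ok v u.
Proof.
elim=> [u0|e u0 w v0 oke j _ IH]; first exact: walk_nil.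
exact: (walk_snoc IH oke (joins_sym j)).
Qed.
End Walks.


Section Indep.
Variables (d : measure_display) (R : realType) (Omega : measurableType d)
  (P : probability Omega R) (E : choiceType) (open_ : E -> Omega -> bool) (p : R).
Hypothesis hB : bernoulli_percolation P open_ p.

Definition Dset (T U : seq E) : set Omega :=
  [set w | (forall f, f \in T -> open_ f w) /\ (forall f, f \in U -> ~~ open_ f w)].

Lemma mDset T U : measurable (Dset T U).
Proof.
have -> : Dset T U = [set w | forall f, f \in T -> open_ f w] `&`
                     [set w | forall f, f \in U -> ~~ open_ f w] by [].
apply: measurableI.
- elim: T => [|f T IH].
    have -> : [set w | forall f, f \in [::] -> open_ f w] = setT.
      by apply/seteqP; split=> // w _ f; rewrite in_nil.
    exact: measurableT.
  have -> : [set w | forall g, g \in f :: T -> open_ g w] =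
      [set w | open_ f w] `&` [set w | forall g, g \in T -> open_ g w].
    apply/seteqP; split=> w /=.
      move=> H; split; first by apply: H; exact: mem_head.
      by move=> g gT; apply: H; rewrite in_cons gT orbT.
    by move=> [H1 H2] g; rewrite in_cons => /orP[/eqP->|]//; exact: H2.
  apply: measurableI => //; exact: hB.1.
- elim: U => [|f U IH].
    have -> : [set w | forall f, f \in [::] -> ~~ open_ f w] = setT.
      by apply/seteqP; split=> // w _ f; rewrite in_nil.
    exact: measurableT.
  have -> : [set w | forall g, g \in f :: U -> ~~ open_ g w] =
      ~` [set w | open_ f w] `&` [set w | forall g, g \in U -> ~~ open_ g w].
    apply/seteqP; split=> w /=.
      move=> H; split; first by apply/negP; apply: H; exact: mem_head.
      by move=> g gT; apply: H; rewrite in_cons gT orbT.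
    move=> [H1 H2] g; rewrite in_cons => /orP[/eqP->|]//; last exact: H2.
    by apply/negP.
  apply: measurableI => //; apply: measurableC; exact: hB.1.
Qed.

Lemma uniq_perm (s1 s2 : seq E) :
  (forall a : pred E, count a s1 = count a s2) -> uniq s1 -> uniq s2.
Proof. by move=> H; rewrite (perm_uniq (s2:=s2)) //; apply/permP. Qed.

Lemma Dset_subT f T U : Dset (f :: T) U `<=` Dset T U.
Proof. by move=> w [H1 H2]; split=> // g gT; apply: H1; rewrite in_cons gT orbT. Qed.

Lemma Dset_subU f T U : Dset T (f :: U) `<=` Dset T U.
Proof. by move=> w [H1 H2]; split=> // g gT; apply: H2; rewrite in_cons gT orbT. Qed.

Lemma Dset_consT f T U w : Dset (f :: T) U w -> open_ f w.
Proof. by move=> [H _]; apply: H; exact: mem_head. Qed.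

Lemma Dset_consU f T U w : Dset T (f :: U) w -> ~~ open_ f w.
Proof. by move=> [_ H]; apply: H; exact: mem_head. Qed.

Lemma Dset_split T U f : Dset T U = Dset (f :: T) U `|` Dset T (f :: U).
Proof.
apply/seteqP; split=> w; last by move=> [/Dset_subT|/Dset_subU].
move=> [H1 H2]; case Hf: (open_ f w); [left|right]; split=> // g;
  rewrite in_cons => /orP[/eqP->|]; rewrite ?Hf //; by [apply: H1|apply: H2].
Qed.

Lemma Dset_disj T U f C :
  (C `&` Dset (f :: T) U) `&` (C `&` Dset T (f :: U)) = set0.
Proof.
apply/seteqP; split=> // w [[_ /Dset_consT H1] [_ /Dset_consU]].
by rewrite H1.
Qed.

Lemma Dset_eq T U T' U' : T =i T' -> U =i U' -> Dset T U = Dset T' U'.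
Proof.
move=> HT HU; apply/seteqP; split=> w [H1 H2]; split=> g.
- by rewrite -HT; apply: H1.
- by rewrite -HU; apply: H2.
- by rewrite HT; apply: H1.
- by rewrite HU; apply: H2.
Qed.

Lemma PDset T U : uniq (T ++ U) ->
  P (Dset T U) = (p ^+ size T * (1 - p) ^+ size U)%:E.
Proof.
elim: U T => [|f U IH] T.
  rewrite cats0 => uT; rewrite expr0 mulr1 -(hB.2.2 T uT); congr (P _).
  by apply/seteqP; split=> w /=; [case | move=> H; split].
move=> uT.
have u2 : uniq ((f :: T) ++ U).
  apply: uniq_perm uT => a /=; rewrite !count_cat /=; lia.
have u1 : uniq (T ++ U) by move: u2 => /= /andP[].
have -> : Dset T (f :: U) = Dset T U `\` Dset (f :: T) U.
  apply/seteqP; split=> w.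
    move=> H; split; first exact: Dset_subU H.
    by move=> /Dset_consT; move: (Dset_consU H) => /negP.
  move=> [[H1 H2] H3]; split=> // g; rewrite in_cons => /orP[/eqP->|/H2]//.
  apply/negP => opf; apply: H3; split=> // g'.
  by rewrite in_cons => /orP[/eqP->|/H1].
rewrite measureD; [| exact: mDset | exact: mDset |]; last first.
  by change (P (Dset T U) < +oo)%E; rewrite (IH T u1) ltry.
change (P (Dset T U) - P (Dset T U `&` Dset (f :: T) U) = (p ^+ size T * (1 - p) ^+ size (f :: U))%:E)%E.
rewrite (_ : Dset T U `&` Dset (f :: T) U = Dset (f :: T) U); last first.
  by apply/seteqP; split; [move=> w [] | move=> w H; split=> //; exact: Dset_subT H].
rewrite !IH // -EFinB; congr (_%:E); rewrite /= !exprS; ring.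
Qed.

Definition detd (B : set Omega) T U (fs : seq E) :=
  forall w w', Dset T U w -> Dset T U w' ->
    (forall f, f \in fs -> open_ f w = open_ f w') -> B w -> B w'.

Lemma detd_sub B T U T' U' fs : Dset T' U' `<=` Dset T U ->
  detd B T U fs -> detd B T' U' fs.
Proof. by move=> HS H w w' Dw Dw'; apply: H; [exact: HS Dw | exact: HS Dw']. Qed.

Lemma detd_splitT B T U f fs : detd B T U (f :: fs) -> detd B (f :: T) U fs.
Proof.
move=> H w w' Dw Dw' A; apply: H; [exact: Dset_subT Dw | exact: Dset_subT Dw' |].
by move=> g; rewrite in_cons => /orP[/eqP->|/A]//; rewrite (Dset_consT Dw) (Dset_consT Dw').
Qed.

Lemma detd_splitU B T U f fs : detd B T U (f :: fs) -> detd B T (f :: U) fs.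
Proof.
move=> H w w' Dw Dw' A; apply: H; [exact: Dset_subU Dw | exact: Dset_subU Dw' |].
move=> g; rewrite in_cons => /orP[/eqP->|/A]//.
by rewrite (negPf (Dset_consU Dw)) (negPf (Dset_consU Dw')).
Qed.

Lemma detd_base B T U : detd B T U [::] ->
  (B `&` Dset T U = Dset T U) \/ (B `&` Dset T U = set0).
Proof.
move=> H; case: (pselect (exists w, Dset T U w /\ B w)) => [[w0 [D0 B0]]|N].
  left; apply/seteqP; split=> [w [] //| w Dw]; split=> //.
  by apply: (H w0 w D0 Dw) => // f; rewrite in_nil.
right; apply/seteqP; split=> [w [Bw Dw]|//]; apply: N; by exists w.
Qed.

Lemma mBD fs : forall B T U, detd B T U fs -> measurable (B `&` Dset T U).
Proof.
elim: fs => [|f fs IH] B T U H.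
  case: (detd_base H) => ->; [exact: mDset | exact: measurable0].
rewrite (Dset_split T U f) setIUr; apply: measurableU; apply: IH.
  exact: detd_splitT.
exact: detd_splitU.
Qed.

Lemma keyP e fs : forall B T U, uniq (e :: T ++ U ++ fs) -> detd B T U fs ->
  (P (B `&` Dset (e :: T) U) = p%:E * P (B `&` Dset T U))%E.
Proof.
elim: fs => [|f fs IH] B T U u H.
  have u' : uniq ((e :: T) ++ U) by move: u; rewrite cats0.
  have u'' : uniq (T ++ U) by move: u' => /= /andP[].
  case: (detd_base H) => H1.
    have H2 : B `&` Dset (e :: T) U = Dset (e :: T) U.
      apply/seteqP; split=> [w [] //| w Dw]; split=> //.
      by have := Dset_subT Dw; rewrite -H1 => -[].
    by rewrite H1 H2 !PDset // -EFinM /= exprS mulrA.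
  have -> : B `&` Dset (e :: T) U = set0.
    by apply/seteqP; split=> // w [Bw /Dset_subT Dw]; rewrite -H1; split.
  by rewrite H1 measure0 mule0.
have u1 : uniq (e :: (f :: T) ++ U ++ fs).
  apply: uniq_perm u => a /=; rewrite !count_cat /= ?count_cat /=; lia.
have u2 : uniq (e :: T ++ (f :: U) ++ fs).
  apply: uniq_perm u => a /=; rewrite !count_cat /= ?count_cat /=; lia.
have H1 := detd_splitT H; have H2 := detd_splitU H.
have He : detd B (e :: T) U (f :: fs) by apply: detd_sub H; exact: Dset_subT.
have H1' := detd_splitT He; have H2' := detd_splitU He.
rewrite (Dset_split (e :: T) U f) (Dset_split T U f) !setIUr.
rewrite !measureU; try exact: Dset_disj; try exact: (mBD H1);
  try exact: (mBD H2); try exact: (mBD H1'); try exact: (mBD H2').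
rewrite (Dset_eq (T := f :: e :: T) (T' := e :: f :: T) (U := U) (U' := U)); last by [].
  change (P (B `&` Dset (e :: f :: T) U) + P (B `&` Dset (e :: T) (f :: U)) =
    p%:E * (P (B `&` Dset (f :: T) U) + P (B `&` Dset T (f :: U))))%E.
  rewrite (IH B (f :: T) U u1 H1) (IH B T (f :: U) u2 H2).
  by rewrite ge0_muleDr.
by move=> g; rewrite !in_cons orbCA.
Qed.
End Indep.


Lemma esumZ_fin (R : realType) (T : choiceType) (A : set T) (k : \bar R)
  (f : T -> \bar R) : finite_set A -> (0 <= k)%E -> (forall i, A i -> 0 <= f i)%E ->
  (k * (\esum_(i in A) f i))%E = \esum_(i in A) (k * f i)%E.
Proof.
move=> fA k0 f0; rewrite !esum_fset //; last first.
- by move=> i; rewrite inE => /f0.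
- by move=> i; rewrite inE => /f0 H; apply: mule_ge0.
rewrite !fsbig_finite // !big_seq ge0_sume_distrr // => i.
by rewrite in_fset_set // inE => /f0.
Qed.

Section Graph2.
Variables (V E : choiceType) (ends : E -> V * V).

Definition internal (S : set V) : set E :=
  [set f | exists a b, joins ends f a b /\ S a /\ S b].

Lemma bd_not_int S f : edge_boundary ends S f -> ~ internal S f.
Proof.
move=> [y [z [j [Sy nSz]]]] [a [b [j' [Sa Sb]]]].
by case: (joins_eq j j') => [[_ ez]|[_ ez]]; apply: nSz; rewrite ez.
Qed.

Lemma internal_other S f u w : internal S f -> joins ends f u w -> S w.
Proof.
move=> [a [b [jab [Sa Sb]]]] j.
by case: (joins_eq j jab) => [[_ ->]|[_ ->]].
Qed.

Lemma finite_internal S : locally_finite ends -> finite_set S ->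
  finite_set (internal S).
Proof.
move=> LF fS; apply: (sub_finite_set (B := \bigcup_(a in S) [set e | exists w, joins ends e a w])).
  by move=> f [a [b [j [Sa _]]]]; exists a => //; exists b.
by apply: bigcup_finite => // a _; exact: LF.
Qed.

Lemma finite_bd S : locally_finite ends -> finite_set S ->
  finite_set (edge_boundary ends S).
Proof.
move=> LF fS; apply: (sub_finite_set (B := \bigcup_(a in S) [set e | exists w, joins ends e a w])).
  by move=> f [a [b [j [Sa _]]]]; exists a => //; exists b.
by apply: bigcup_finite => // a _; exact: LF.
Qed.

Section Surg.
Variables (Omega : Type) (open_ : E -> Omega -> bool).

Lemma surgery (w : Omega) S e y z : joins ends e y z -> S y -> ~ S z ->
  forall u v, walk ends (fun f => open_ f w /\ ~ (edge_boundary ends S f /\ f <> e)) u v ->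
  S u ->
  walk ends (fun f => open_ f w /\ internal S f) u y \/
  (S v /\ walk ends (fun f => open_ f w /\ internal S f) u v).
Proof.
move=> j Sy nSz u v; elim=> [u0 Su|f u0 w0 v0 [opf nb] jf _ IH Su].
  by right; split => //; exact: walk_nil.
case: (pselect (f = e)) => [fe|fne].
  subst f; left; case: (joins_eq jf j) => [[eu _]|[eu _]]; subst u0.
    exact: walk_nil.
  by exfalso; exact: nSz Su.
have Sw0 : S w0.
  apply: contrapT => nS; apply: nb; split; last exact: fne.
  by exists u0, w0.
have intf : internal S f by exists u0, w0.
case: (IH Sw0) => [H|[Sv H]]; [left|right; split=> //];
  exact: (walk_cons (conj opf intf) jf H).
Qed.

Lemma A_eq S x e y z : S x -> joins ends e y z -> S y -> ~ S z ->
  A_event ends open_ x e (edge_boundary ends S) =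
  [set w | open_ e w] `&` conn_in ends open_ S x y.
Proof.
move=> Sx j Sy nSz; apply/seteqP; split=> w'.
- move=> [oe [a [b [jab Hw]]]]; split=> //; split=> //.
  case: (surgery j Sy nSz Hw Sx) => [H|[Sa H]].
    by apply: walk_mono H => f [? ?]; split.
  case: (joins_eq jab j) => [[ea _]|[ea _]]; subst a; last by [].
  by apply: walk_mono H => f [? ?]; split.
- move=> [oe [_ H]]; split=> //; exists y, z; split=> //.
  apply: walk_mono H => f [opf intf]; split=> // -[bf _].
  exact: (bd_not_int bf intf).
Qed.
End Surg.
End Graph2.


Section L1.
Variables (V E : choiceType) (ends : E -> V * V)
  (d : measure_display) (R : realType) (Omega : measurableType d)
  (P : probability Omega R) (open_ : E -> Omega -> bool) (p : R).
Hypothesis hB : bernoulli_percolation P open_ p.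
Hypothesis LF : locally_finite ends.

Lemma P_A S x e y z : finite_set S -> S x -> joins ends e y z -> S y -> ~ S z ->
  P (A_event ends open_ x e (edge_boundary ends S)) =
  (p%:E * P (conn_in ends open_ S x y))%E.
Proof.
move=> fS Sx j Sy nSz; rewrite (A_eq open_ Sx j Sy nSz).
have fF := finite_internal LF fS.
pose fs : seq E := finmap.enum_fset (fset_set (internal ends S)).
have key := keyP hB (e := e) (fs := fs) (B := conn_in ends open_ S x y) (T := [::]) (U := [::]).
have E1 : Dset open_ [:: e] [::] = [set w | open_ e w].
  apply/seteqP; split=> w; first by move=> [H _]; apply: H; exact: mem_head.
  by move=> H; split=> // f; rewrite in_cons in_nil orbF => /eqP->.
have E2 : Dset open_ [::] [::] = setT by apply/seteqP; split=> // w _; split.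
rewrite E1 E2 setIT setIC in key; apply: key.
  rewrite /= andbC /=; apply/andP; split; first exact: finmap.fset_uniq.
  apply/negP => H; have : internal ends S e.
    by move: H; rewrite /fs in_fset_set // inE.
  by apply: (bd_not_int (S := S)); exists y, z.
move=> w w' _ _ A [Sx' H]; split=> //.
apply: walk_mono H => f [opf intf]; split=> //.
have : f \in fs by rewrite /fs in_fset_set // inE.
by move/A <-.
Qed.

Lemma L1 S x : 0 <= p -> finite_set S -> S x ->
  \esum_(e in edge_boundary ends S) P (A_event ends open_ x e (edge_boundary ends S))
  = phi P ends open_ p x S.
Proof.
move=> p0 fS Sx; rewrite /phi.
transitivity (\esum_(y in S) \esum_(e in [set e | exists z, joins ends e y z /\ ~ S z])
   P (A_event ends open_ x e (edge_boundary ends S)))%E; last first.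
  have p0E : (0 <= p%:E)%E by rewrite lee_fin.
  have fout y : finite_set [set e | exists z, joins ends e y z /\ ~ S z].
    apply: (sub_finite_set (B := [set e | exists w, joins ends e y w])); last exact: LF.
    by move=> e [z [j _]]; exists z.
  symmetry; rewrite (esumZ_fin fS p0E); last first.
    by move=> y _; apply: esum_ge0 => e _; exact: measure_ge0.
  apply: eq_esum => y Sy; rewrite (esumZ_fin (fout y) p0E); last first.
    by move=> e _; exact: measure_ge0.
  apply: eq_esum => e He; case: He => z [j nSz]; symmetry; exact: (P_A fS Sx j Sy nSz).
rewrite (esum_esum (a := fun _ e => P (A_event ends open_ x e (edge_boundary ends S)))); last first.
  by move=> *; exact: measure_ge0.
apply: reindex_esum; split.
- by move=> [y e] [Sy [z [j nSz]]] /=; exists y, z.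
- move=> [y1 e1] [y2 e2]; rewrite !inE /= => -[S1 [z1 [j1 n1]]] [S2 [z2 [j2 n2]]] /= E12.
  subst e2; congr (_, _).
  by case: (joins_eq j1 j2) => [[]|[e1z _]] //; exfalso; apply: n2; rewrite -e1z.
- by move=> e [y [z [j [Sy nSz]]]]; exists (y, e) => //; split=> //; exists z.
Qed.
End L1.


Section Comp.
Variables (V E : choiceType) (ends : E -> V * V) (S : set V) (x : V).
Hypothesis Sx : S x.

Definition compo : set V := [set v | S v /\ walk ends (internal ends S) x v].

Lemma comp_sub : compo `<=` S. Proof. by move=> v []. Qed.

Lemma comp_x : compo x. Proof. by split=> //; exact: walk_nil. Qed.

Lemma walk_comp (Q : E -> Prop) u v :
  walk ends (fun f => Q f /\ internal ends S f) u v -> compo u ->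
  walk ends (fun f => Q f /\ internal ends compo f) u v.
Proof.
elim=> [u0 _|f u0 w0 v0 [Qf intf] jf _ IH Cu]; first exact: walk_nil.
have Sw0 : S w0 := internal_other intf jf.
have Cw0 : compo w0 by split=> //; exact: (walk_snoc Cu.2 intf jf).
apply: (walk_cons _ jf (IH Cw0)); split=> //; exists u0, w0; by [].
Qed.

Lemma internal_comp_S f : internal ends compo f -> internal ends S f.
Proof. by move=> [a [b [j [[Sa _] [Sb _]]]]]; exists a, b. Qed.

Lemma comp_fcc : finite_set S -> finite_connected_containing ends x compo.
Proof.
move=> fS; split; first exact: sub_finite_set comp_sub fS.
split; first exact: comp_x.
move=> u v Cu Cv.
have H : walk ends (fun f => True /\ internal ends S f) u v.
  apply: walk_mono (walk_cat (walk_rev Cu.2) Cv.2) => f H; by split.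
by apply: walk_mono (walk_comp H Cu) => f [_ [a [b H']]]; exists a, b.
Qed.

Variables (Omega : Type) (open_ : E -> Omega -> bool).

Lemma conn_comp y : conn_in ends open_ S x y = conn_in ends open_ compo x y.
Proof.
apply/seteqP; split=> w [_ H]; split; first exact: comp_x.
- have H' : walk ends (fun f => open_ f w /\ internal ends S f) x y.
    by apply: walk_mono H => f [? ?]; split.
  by apply: walk_mono (walk_comp H' comp_x) => f [? ?]; split.
- by [].
- by apply: walk_mono H => f [? /internal_comp_S]; split.
Qed.

Lemma conn_empty y : ~ compo y -> conn_in ends open_ S x y = set0.
Proof.
move=> nC; apply/seteqP; split=> // w [_ H]; apply: nC.
have H' : walk ends (internal ends S) x y by apply: walk_mono H => f [].
split=> //; clear H; elim: H' Sx => // f u0 w0 v0 intf jf _ IH _.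
exact: IH (internal_other intf jf).
Qed.

Lemma out_comp y : compo y ->
  [set e | exists z, joins ends e y z /\ ~ S z] =
  [set e | exists z, joins ends e y z /\ ~ compo z].
Proof.
move=> Cy; apply/seteqP; split=> e [z [j nz]]; exists z; split=> //.
  by move=> /comp_sub.
move=> Sz; apply: nz; split=> //.
apply: (walk_snoc Cy.2 _ j); exists y, z; split=> //; split=> //; exact: Cy.1.
Qed.
End Comp.

Lemma phi_comp (V E : choiceType) (ends : E -> V * V)
  (d : measure_display) (R : realType) (Omega : measurableType d)
  (P : probability Omega R) (open_ : E -> Omega -> bool) (p : R) S x :
  S x -> phi P ends open_ p x S = phi P ends open_ p x (compo ends S x).
Proof.
move=> Sx; rewrite /phi; congr (_ * _)%E.
rewrite [in LHS]esum_mkcond [in RHS]esum_mkcond; apply: eq_esum => y _.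
case: (pselect (compo ends S x y)) => Cy.
  have Sy := comp_sub Cy.
  rewrite !ifT ?inE //.
  by rewrite (out_comp Cy) (conn_comp _ Sx).
rewrite [in RHS]ifF; last by apply/negP; rewrite inE.
case: ifP => // _.
rewrite (conn_empty Sx open_ Cy); apply: esum1 => e _; exact: measure0.
Qed.

Unset Implicit Arguments. Set Strict Implicit.

Theorem proposition3p1
  (V E : choiceType) (ends : E -> V * V)
  (d : measure_display) (R : realType) (Omega : measurableType d)
  (P : probability Omega R) (open_ : E -> Omega -> bool)
  (x : V) (p : R) :
  locally_finite ends -> connected_graph ends -> infinite_graph V ->
  0 <= p <= 1 ->
  bernoulli_percolation P open_ p ->
  ereal_inf [set (\esum_(e in Pi) P (A_event ends open_ x e Pi))%E
            | Pi in B_E ends x]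
  = ereal_inf [set phi P ends open_ p x S
              | S in [set S : set V | finite_set S /\ S x]].
Proof.
move=> LF _ _ /andP[p0 _] hB; congr ereal_inf; apply/seteqP; split.
- move=> _ [Pi [S [[fS [Sx _]] ->]] <-].
  by exists S => //; rewrite (L1 hB LF p0 fS Sx).
- move=> _ [S [fS Sx] <-].
  have fC := comp_fcc ends Sx fS.
  exists (edge_boundary ends (compo ends S x)).
    by exists (compo ends S x).
  rewrite (L1 hB LF p0 fC.1 fC.2.1); symmetry; exact: phi_comp.
Qed.
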